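(* Let $p,p'\in[0,1]^N$ with $\|p-p'\|_0\le1$. If $\mathrm{FDP}[BH_q;p']\ne\mathrm{FDP}[BH_q;p]$, then $\tilde k'\ne\tilde k$.
   Context: $\mathcal N=\{1,\dots,N\}=\mathcal H_0\sqcup\mathcal H_1$ is a fixed partition of test indices into nulls and alternatives; $q\in(0,1)$. $\|p-p'\|_0$ is the number of indices $i$ with $p_i\ne p'_i$. For $x\in[0,1]^N$, its rejection count is $\tilde k(x)=\max\{i\in\{0,\dots,N\}:|\{j\in\mathcal N:0\le x_j<iq/N\}|=i\}$; the Benjamini–Hochberg procedure $BH_q$ rejects the tests $j$ with $x_j<\tilde k(x)q/N$, and $\mathrm{FDP}[BH_q;x]=|\{j\in\mathcal H_0:x_j<\tilde k(x)q/N\}|/\max(\tilde k(x),1)$. Write $\tilde k=\tilde k(p)$, $\tilde k'=\tilde k(p')$. *)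

(* Defs.v *)
From HB Require Import structures.
From mathcomp Require Import all_boot all_order all_algebra.
From mathcomp Require Export reals.
Set Implicit Arguments. Unset Strict Implicit. Unset Printing Implicit Defensive.
Import Order.TTheory GRing.Theory Num.Theory.
Local Open Scope ring_scope.

Section BH.
Variables (R : realType) (N : nat) (q : R).

Definition below_count (x : 'I_N -> R) (t : R) : nat :=
  #|[set j : 'I_N | (0 <= x j) && (x j < t)]|.

(* rejection count  k~(x) = max{ i in {0..N} : |{j : 0 <= x_j < i q/N}| = i };
   i = 0 always qualifies, so the default 0 of \max is harmless. *)
Definition ktilde (x : 'I_N -> R) : nat :=
  \max_(i < N.+1 | below_count x (i%:R * q / N%:R) == i) (i : nat).

Definition FDP_BH (H0 : {set 'I_N}) (x : 'I_N -> R) : R :=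
  (#|[set j in H0 | x j < (ktilde x)%:R * q / N%:R]|)%:R
    / (maxn (ktilde x) 1)%:R.

Definition l0dist (p p' : 'I_N -> R) : nat := #|[set i : 'I_N | p i != p' i]|.
End BH.

(* Main.v *)
Require Import Defs.
From mathcomp Require Import all_boot all_order all_algebra reals.
Import Order.TTheory GRing.Theory Num.Theory.
Local Open Scope ring_scope.

Lemma ktilde_ok (R : realType) (N : nat) (q : R) (x : 'I_N -> R) :
  below_count x ((ktilde q x)%:R * q / N%:R) = ktilde q x.
Proof.
apply/eqP; rewrite /ktilde.
apply: (big_ind (fun m : nat => below_count x (m%:R * q / N%:R) == m)).
- rewrite /below_count mul0r mul0r; apply/eqP; apply/eqP; rewrite cards_eq0.
  apply/eqP/setP => j; rewrite !inE; apply/negbTE; rewrite negb_and -leNgt.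
  by case: (0 <= x j).
- by move=> a b Ha Hb; rewrite /maxn; case: ifP.
- by [].
Qed.

Theorem lemma2 (R : realType) (N : nat) (H0 : {set 'I_N}) (q : R)
  (p p' : 'I_N -> R) :
  0 < q < 1 ->
  (forall i, 0 <= p i <= 1) -> (forall i, 0 <= p' i <= 1) ->
  (l0dist p p' <= 1)%N ->
  FDP_BH q H0 p' != FDP_BH q H0 p ->
  ktilde q p' != ktilde q p.
Proof.
move=> _ Hp Hp' Hd; apply: contraNneq => Hk.
have Kp := @ktilde_ok _ _ q p; have Kp' := @ktilde_ok _ _ q p'.
rewrite /FDP_BH Hk; rewrite Hk in Kp'.
set t := (ktilde q p)%:R * q / N%:R in Kp Kp' *.
set A := [set j : 'I_N | (0 <= p j) && (p j < t)].
set A' := [set j : 'I_N | (0 <= p' j) && (p' j < t)].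
have HA : forall j, (j \in A') = (j \in A).
  move=> j; have [e|ne] := eqVneq (p j) (p' j).
    by rewrite !inE e.
  have uniq : forall i, p i != p' i -> i = j.
    move=> i ni; move/card_le1_eqP: Hd => H. by apply: esym; apply: (H i j); rewrite inE.
  have E : A' :\ j = A :\ j.
    apply/setP => i; rewrite !inE; case: (eqVneq i j) => //= nij.
    have [e|ne'] := eqVneq (p i) (p' i); first by rewrite e.
    by rewrite (uniq i ne') eqxx in nij.
  have := cardsD1 j A; have := cardsD1 j A'.
  rewrite E -/(below_count p' t) -/(below_count p t) Kp Kp'.
  by case: (j \in A'); case: (j \in A) => //= -> /eqP; rewrite ?eqn_add2r.
apply/eqP; congr (_ / _); congr (_%:R); apply: eq_card => j; rewrite !inE.
have := HA j; rewrite !inE.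
by case/andP: (Hp j) => -> _; case/andP: (Hp' j) => -> _ /= ->.
Qed.
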